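(* Let $\delta > 0$. There is a function $\epsilon \colon B_{\delta}(\vec 0) \to \mathbb R$ such that for all $\vec \theta \in B_{\delta}(\vec 0)$, \[ \operatorname{Re}(\Phi(\vec \theta)) = e^{-\frac{1}{2} \vec \theta^T M \vec \theta} (1 + \epsilon(\vec \theta)) \] and $|\epsilon(\vec \theta)| \leq \frac{1}{6} (d \delta)^4 e^{\frac{1}{2} d^2 \delta^2}$. Moreover, for all $\vec\theta\in B_\delta(\vec 0)$, \[ |\operatorname{Im}(\Phi(\vec \theta))| \leq \frac{(d \delta)^3}{6}. \] Further, if $d \delta < 1$, then $\operatorname{Re}(\Phi(\vec \theta)) > 1/3$ for all $\vec\theta\in B_\delta(\vec 0)$.
   Context: Let $g\ge 2$, $k\ge 2$ be integers, $\mathbb Z_g$ the integers mod $g$, and $d=\binom{k}{2}(g-1)$. Index the coordinates of $\mathbb R^d$ by pairs $(\{i,j\},a)$ with $1\le i<j\le k$ and $a\in\mathbb Z_g\setminus\{0\}$. Define $Z:(\mathbb Z_g)^k\to\mathbb R^d$ by $[Z(\vec x)]_{\{i,j\},a}=1-1/g$ if $x_i-x_j=a$ and $-1/g$ otherwise, and $\Phi(\vec\theta)=\sum_{\vec x\in(\mathbb Z_g)^k} g^{-k}e^{i\vec\theta\cdot Z(\vec x)}$. Let $B_\delta(\vec 0)=\{\vec\mu\in[-\pi,\pi)^d: \vec\mu\equiv\vec\zeta \pmod{2\pi}$ componentwise, for some $\vec\zeta$ with $|\zeta_{\{i,j\},a}|<\delta$ for all coordinates$\}$. Let $M$ be the $d\times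 d$ matrix indexed like $\mathbb R^d$ with $M_{(\{i,j\},a),(\{m,n\},b)}=\frac{g-1}{g^2}$ if $\{i,j\}=\{m,n\}$ and $a=b$; $-\frac{1}{g^2}$ if $\{i,j\}=\{m,n\}$ and $a\ne b$; and $0$ if $\{i,j\}\ne\{m,n\}$. *)

(* Defs.v *)
From HB Require Import structures.
From mathcomp Require Import all_boot all_order all_algebra.
From mathcomp Require Import all_classical all_reals.
From mathcomp Require Import sequences exp trigo.
From mathcomp Require Import complex.
Set Implicit Arguments. Unset Strict Implicit. Unset Printing Implicit Defensive.
Import Order.TTheory GRing.Theory Num.Theory.
Local Open Scope ring_scope.

(* Coordinate index set of R^d: pairs ({i,j}, a) with i < j in 'I_k
   (0-based version of 1 <= i < j <= k) and a in Z_g \ {0}.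
   'Z_g is used only under the hypothesis 2 <= g. *)
Definition Idx (k g : nat) : finType :=
  {c : ('I_k * 'I_k) * 'Z_g | (c.1.1 < c.1.2)%N && (c.2 != 0)}.

Definition pairOf k g (c : Idx k g) : 'I_k * 'I_k := (val c).1.
Definition valOf k g (c : Idx k g) : 'Z_g := (val c).2.

Definition dimd (k g : nat) : nat := 'C(k, 2) * (g - 1).

Definition Zvec (R : realType) k g (x : {ffun 'I_k -> 'Z_g}) (c : Idx k g) : R :=
  if x (pairOf c).1 - x (pairOf c).2 == valOf c then 1 - 1 / g%:R else - (1 / g%:R).

Definition dotp (R : realType) k g (th : Idx k g -> R) (v : Idx k g -> R) : R :=
  \sum_(c : Idx k g) th c * v c.

Definition cexpi (R : realType) (t : R) : R[i] := (cos t +i* sin t)%C.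

Definition Phi (R : realType) k g (th : Idx k g -> R) : R[i] :=
  \sum_(x : {ffun 'I_k -> 'Z_g}) ((g%:R ^- k : R)%:C * cexpi (@dotp R k g th (@Zvec R k g x)))%C.

Definition Mmat (R : realType) k g (c c' : Idx k g) : R :=
  if pairOf c == pairOf c' then
    (if valOf c == valOf c' then (g%:R - 1) / (g%:R ^+ 2) else - (1 / g%:R ^+ 2))
  else 0.

Definition quadM (R : realType) k g (th : Idx k g -> R) : R :=
  \sum_(c : Idx k g) \sum_(c' : Idx k g) th c * @Mmat R k g c c' * th c'.

Definition inB (R : realType) k g (delta : R) (th : Idx k g -> R) : Prop :=
  (forall c, - pi <= th c < pi) /\
  exists zeta : Idx k g -> R,
    forall c, (exists n : int, th c = zeta c + n%:~R * (2 * pi)) /\ `|zeta c| < delta.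

(* Main.v *)
Require Import Defs.
From HB Require Import structures.
From mathcomp Require Import all_boot all_order all_algebra.
From mathcomp Require Import all_classical all_reals.
From mathcomp Require Import sequences exp trigo.
From mathcomp Require Import complex.
From mathcomp Require topology normedtype derive.
From mathcomp Require Import ring lra zify.
Import Order.TTheory GRing.Theory Num.Theory.
Local Open Scope ring_scope.

Module An.
Import topology normedtype derive numFieldNormedType.Exports.
Section S.
Variable R : realType.

Lemma mono0 (f df : R -> R) : (forall x : R, is_derive x (1:R) f (df x)) ->
  (forall x, 0 <= x -> 0 <= df x) -> forall x, 0 <= x -> f 0 <= f x.
Proof.
move=> hd hdf x x0.
have cont : continuous f.
  by move=> y; apply/differentiable_continuous/derivable1_diffP; apply: ex_derive.
have [c] := MVT_segment x0 (fun y _ => hd y) (continuous_subspaceT cont).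
rewrite in_itv /= => /andP[c0 _] E.
by rewrite -subr_ge0 E mulr_ge0 // ?hdf // subr0.
Qed.

Lemma sin_le_x (x : R) : 0 <= x -> sin x <= x.
Proof.
move=> x0; have : (fun t => t - sin t) 0 <= (fun t => t - sin t) x.
  have hd : forall y : R, is_derive y (1:R) (fun t => t - sin t) ((fun t => 1 - cos t) y).
    by move=> y; apply: is_derive_eq => /=; rewrite /GRing.scale /=; field.
  apply: (@mono0 _ _ hd); last exact: x0.
  by move=> y _; rewrite subr_ge0 cos_le1.
rewrite /=. by rewrite sin0 subr0 subr_ge0.
Qed.

Lemma cos_ge_x (x : R) : 0 <= x -> 1 - x ^+ 2 / 2 <= cos x.
Proof.
move=> x0; have : (fun t => cos t - 1 + t ^+ 2 / 2) 0 <= (fun t => cos t - 1 + t ^+ 2 / 2) x.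
  have hd : forall y : R, is_derive y (1:R) (fun t => cos t - 1 + t ^+ 2 / 2) ((fun t => t - sin t) y).
    move=> y; apply: is_derive_eq => /=.
    by rewrite /GRing.scale /=; field.
  apply: (@mono0 _ _ hd); last exact: x0.
  by move=> y y0; rewrite subr_ge0 sin_le_x.
rewrite /=. rewrite cos0 expr0n /= mul0r subrr addr0 => h; lra.
Qed.

Lemma sin_ge_x (x : R) : 0 <= x -> x - x ^+ 3 / 6 <= sin x.
Proof.
move=> x0; have : (fun t => sin t - t + t ^+ 3 / 6) 0 <= (fun t => sin t - t + t ^+ 3 / 6) x.
  have hd : forall y : R, is_derive y (1:R) (fun t => sin t - t + t ^+ 3 / 6) ((fun t => cos t - 1 + t ^+ 2 / 2) y).
    by move=> y; apply: is_derive_eq => /=; rewrite /GRing.scale /=; field.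
  apply: (@mono0 _ _ hd); last exact: x0.
  by move=> y y0; have := @cos_ge_x y y0; lra.
rewrite /=. rewrite sin0 expr0n /= mul0r subrr addr0 => h; lra.
Qed.

Lemma cos_le_x (x : R) : 0 <= x -> cos x <= 1 - x ^+ 2 / 2 + x ^+ 4 / 24.
Proof.
move=> x0; have : (fun t => 1 - t ^+ 2 / 2 + t ^+ 4 / 24 - cos t) 0 <= (fun t => 1 - t ^+ 2 / 2 + t ^+ 4 / 24 - cos t) x.
  have hd : forall y : R, is_derive y (1:R) (fun t => 1 - t ^+ 2 / 2 + t ^+ 4 / 24 - cos t) ((fun t => - t + t ^+ 3 / 6 + sin t) y).
    by move=> y; apply: is_derive_eq => /=; rewrite /GRing.scale /=; field.
  apply: (@mono0 _ _ hd); last exact: x0.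
  by move=> y y0; have := @sin_ge_x y y0; lra.
rewrite /=. rewrite cos0 !expr0n /= !mul0r subr0 addr0 subrr => h; lra.
Qed.

Lemma expR_le2 (u : R) : 0 <= u -> 1 <= expR u * (1 - u + u ^+ 2 / 2).
Proof.
move=> u0; have : (fun t => expR t * (1 - t + t ^+ 2 / 2)) 0 <= (fun t => expR t * (1 - t + t ^+ 2 / 2)) u.
  have hd : forall y : R, is_derive y (1:R) (fun t => expR t * (1 - t + t ^+ 2 / 2)) ((fun t => expR t * (t ^+ 2 / 2)) y).
    by move=> y; apply: is_derive_eq => /=; rewrite /GRing.scale /=; field.
  apply: (@mono0 _ _ hd); last exact: u0.
  by move=> y y0; rewrite mulr_ge0 // ?expR_ge0 // divr_ge0 // sqr_ge0.
rewrite /=. by rewrite expR0 expr0n /= mul0r subr0 addr0 mul1r.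
Qed.
End S.

End An.
Import An.

Section Comb.
Variables (R : realType) (g k : nat).
Hypothesis hg : (2 <= g)%N.

Definition shift (u : 'I_k) (s : 'Z_g) (x : {ffun 'I_k -> 'Z_g}) : {ffun 'I_k -> 'Z_g} :=
  [ffun v => if v == u then x v + s else x v].

Lemma shift_inj u s : injective (shift u s).
Proof.
move=> x y /ffunP h; apply/ffunP => v; have := h v; rewrite !ffunE.
by case: (v == u) => // /addIr.
Qed.

Lemma sum_shift (F : {ffun 'I_k -> 'Z_g} -> R) u s :
  \sum_x F (shift u s x) = \sum_x F x.
Proof. by rewrite [RHS](reindex_inj (@shift_inj u s)). Qed.

Lemma cardZ : #|'Z_g| = g.
Proof. by rewrite card_ord; case: g hg => [|[|]]. Qed.

Lemma sum_avg (F : {ffun 'I_k -> 'Z_g} -> R) u :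
  g%:R * \sum_x F x = \sum_x \sum_(s : 'Z_g) F (shift u s x).
Proof.
rewrite exchange_big /= [RHS](eq_bigr (fun _ => \sum_x F x)); last by move=> s _; exact: sum_shift.
by rewrite sumr_const cardZ mulr_natl.
Qed.

Lemma sum_delta (T : finType) (a : T) (F : T -> R) :
  \sum_(z : T) (z == a)%:R * F z = F a.
Proof.
rewrite (bigD1 a) //= eqxx mul1r big1 ?addr0 // => z /negbTE ->.
by rewrite mul0r.
Qed.

Lemma sum_inj (e : 'Z_g -> 'Z_g) (F : 'Z_g -> R) : injective e ->
  \sum_s F (e s) = \sum_s F s.
Proof. by move=> ie; rewrite [RHS](reindex_inj ie). Qed.

Lemma ZvecE x (c : Idx k g) : Zvec R x c =
  (x (pairOf c).1 - x (pairOf c).2 == valOf c)%:R - 1 / g%:R.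
Proof. by rewrite /Zvec; case: eqP => _; rewrite ?add0r. Qed.


Lemma shift_on u s x : shift u s x u = x u + s.
Proof. by rewrite ffunE eqxx. Qed.
Lemma shift_off u s x v : v != u -> shift u s x v = x v.
Proof. by rewrite ffunE => /negbTE ->. Qed.


Lemma sum_ind1 (e : 'Z_g -> 'Z_g) (a : 'Z_g) : injective e ->
  \sum_s ((e s == a)%:R : R) = 1.
Proof.
move=> ie; rewrite -[RHS](@sum_delta _ a (fun _ => 1)).
etransitivity; last exact: (@sum_inj e (fun z => (z == a)%:R * 1) ie).
by apply: eq_bigr => s _; rewrite mulr1.
Qed.

Lemma gR_neq0 : (g%:R : R) != 0.
Proof. by rewrite pnatr_eq0 -lt0n (leq_trans _ hg). Qed.

Lemma sumZ_shift x (c : Idx k g) u : (pairOf c).1 != (pairOf c).2 ->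
  (u == (pairOf c).1) || (u == (pairOf c).2) ->
  \sum_s Zvec R (shift u s x) c = 0.
Proof.
move=> hij hu.
under eq_bigr do rewrite ZvecE.
rewrite sumrB sumr_const cardZ.
suff -> : \sum_(s : 'Z_g) ((shift u s x (pairOf c).1 - shift u s x (pairOf c).2 == valOf c)%:R : R) = 1.
  by rewrite -[_ *+ g]mulr_natl mulrC div1r mulVf ?subrr // gR_neq0.
have hji : (pairOf c).2 != (pairOf c).1 by rewrite eq_sym.
case/orP: hu => /eqP ->.
- under eq_bigr do rewrite shift_on (shift_off _ _ _ _ hji).
  by apply: sum_ind1 => s1 s2 /= /addIr/addrI.
- under eq_bigr do rewrite shift_on (shift_off _ _ _ _ hij).
  by apply: sum_ind1 => s1 s2 /= /addrI/oppr_inj/addrI.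
Qed.


Lemma pair_lt (c : Idx k g) : ((pairOf c).1 < (pairOf c).2)%N.
Proof. by case: c => [[[i j] a]] /= /andP[]. Qed.

Lemma pair_neq (c : Idx k g) : (pairOf c).1 != (pairOf c).2.
Proof. by apply/eqP => h; have := pair_lt c; rewrite h ltnn. Qed.

Lemma sumZ0 (c : Idx k g) : \sum_x Zvec R x c = 0.
Proof.
apply: (mulfI gR_neq0); rewrite mulr0 (sum_avg _ (pairOf c).1).
by apply: big1 => x _; apply: sumZ_shift; rewrite ?pair_neq ?eqxx.
Qed.

Lemma card_ff : #|{ffun 'I_k -> 'Z_g}| = (g ^ k)%N.
Proof. by rewrite card_ffun cardZ card_ord. Qed.

Lemma sum_const_ff (a : R) : \sum_(x : {ffun 'I_k -> 'Z_g}) a = g%:R ^+ k * a.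
Proof. by rewrite sumr_const card_ff -natrX mulr_natl. Qed.

Lemma sum_invg : \sum_(z : 'Z_g) (1 / g%:R : R) = 1.
Proof. by rewrite sumr_const cardZ -[(1 / g%:R) *+ g]mulr_natr div1r mulVf // gR_neq0. Qed.

Lemma sq_sum (a b : 'Z_g) :
  \sum_(z : 'Z_g) (((z == a)%:R - 1 / g%:R) * ((z == b)%:R - 1 / g%:R) : R)
  = (a == b)%:R - 1 / g%:R.
Proof.
under eq_bigr do rewrite mulrBl.
rewrite sumrB sum_delta -mulr_sumr sumrB.
have -> : \sum_(z : 'Z_g) ((z == b)%:R : R) = 1.
  by rewrite -[RHS](@sum_delta _ b (fun _ => 1)); apply: eq_bigr => z _; rewrite mulr1.
by rewrite sum_invg subrr mulr0 subr0.
Qed.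

Lemma sumZZ (c c' : Idx k g) :
  \sum_x Zvec R x c * Zvec R x c' = g%:R ^+ k * Mmat R c c'.
Proof.
apply: (mulfI gR_neq0).
rewrite /Mmat; case: eqP => hp.
- rewrite (sum_avg _ (pairOf c).1).
  have hji : (pairOf c).2 != (pairOf c).1 by rewrite eq_sym pair_neq.
  under eq_bigr => x _.
    under eq_bigr do rewrite !ZvecE -hp shift_on (shift_off _ _ _ _ hji).
    rewrite (@sum_inj (fun s => x (pairOf c).1 + s - x (pairOf c).2)
       (fun z => ((z == valOf c)%:R - 1 / g%:R) * ((z == valOf c')%:R - 1 / g%:R))); last first.
      by move=> s1 s2 /= /addIr/addrI.
    rewrite sq_sum.
  over.
  rewrite sum_const_ff; have hG := gR_neq0.
  by case: (valOf c == valOf c') => /=; field; rewrite ?expf_neq0.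
- rewrite !mulr0.
  set i := (pairOf c).1; set j := (pairOf c).2.
  set m := (pairOf c').1; set n := (pairOf c').2.
  have hij : (i < j)%N := pair_lt c.
  have hmn : (m < n)%N := pair_lt c'.
  have hne : (i != m) || (j != n).
    rewrite -negb_and; apply/negP => /andP[/eqP h1 /eqP h2]; apply: hp.
    by rewrite /i /j /m /n in h1 h2; rewrite [pairOf c]surjective_pairing h1 h2 -surjective_pairing.
  have [u [hu hum hun]] : exists u, [/\ (u == i) || (u == j), u != m & u != n].
    case: (eqVneq i m) => [eim|nim]; case: (eqVneq i n) => [ein|nin].
    + by exfalso; move: hmn; rewrite -eim -ein ltnn.
    + exists j; split; rewrite ?eqxx ?orbT //.
        by apply/eqP => e; move: hij; rewrite e -eim ltnn.
      by move: hne; rewrite eim eqxx.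
    + exists j; split; rewrite ?eqxx ?orbT //.
        by apply/eqP => e; move: hij hmn; rewrite e -ein => /ltn_trans h /h; rewrite ltnn.
      by apply/eqP => e; move: hij; rewrite e -ein ltnn.
    + by exists i; split; rewrite ?eqxx.
  rewrite eq_sym in hum; rewrite eq_sym in hun.
  rewrite (sum_avg _ u); apply: big1 => x _.
  under eq_bigr do rewrite [Zvec R _ c']ZvecE (shift_off _ _ _ _ hum) (shift_off _ _ _ _ hun) -ZvecE.
  by rewrite -mulr_suml sumZ_shift ?mul0r // pair_neq.
Qed.

End Comb.

Lemma sum_lt (k j : nat) : (j <= k)%N -> (\sum_(i < k) (if (i < j)%N then 1 else 0) = j)%N.
Proof.
move=> jk; rewrite -(big_mkord predT (fun i => if (i < j)%N then 1 else 0)%N).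
rewrite (@big_cat_nat _ _ _ j 0 k) //=.
rewrite (eq_big_nat _ _ (F2 := fun _ => 1%N)); last by move=> i /andP[_ ->].
rewrite [X in (_ + X)%N](eq_big_nat _ _ (F2 := fun _ => 0%N)); last first.
  by move=> i /andP[ji _]; rewrite ltnNge ji.
by rewrite !sum_nat_const_nat muln1 muln0 addn0 subn0.
Qed.

Lemma card_pairs k : #|[pred p : 'I_k * 'I_k | (p.1 < p.2)%N]| = 'C(k, 2).
Proof.
rewrite -sum1_card big_mkcond /=.
rewrite -(pair_big predT predT (fun (i j : 'I_k) => if (i < j)%N then 1 else 0)%N) /=.
rewrite exchange_big /=.
rewrite (eq_bigr (fun j : 'I_k => nat_of_ord j)); last by move=> j _; rewrite sum_lt // ltnW.
by rewrite -(big_mkord predT (fun j => j)) bin2_sum.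
Qed.

Lemma card_Idx k g : (2 <= g)%N -> #|Idx k g| = dimd k g.
Proof.
move=> hg.
rewrite /Idx card_sig (eq_card (B := [predX [pred p : 'I_k * 'I_k | (p.1 < p.2)%N] & predC1 (0%R : 'Z_g)])); last by case=> [[i j] a].
rewrite cardX cardC1 card_pairs /dimd card_ord.
by case: g hg => [|[|]].
Qed.

Section Main.
Variables (R : realType) (g k : nat).
Hypothesis hg : (2 <= g)%N.

Lemma pow_le (x y : R) n : 0 <= x -> x <= y -> x ^+ n <= y ^+ n.
Proof. by move=> x0 xy; rewrite lerXn2r // nnegrE // (le_trans x0 xy). Qed.

Lemma sin_bound (y : R) : `|sin y - y| <= `|y| ^+ 3 / 6.
Proof.
have [y0|y0] := leP 0 y.
  have h1 := @sin_le_x _ _ y0; have h2 := @sin_ge_x _ _ y0.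
  by rewrite ler0_norm ?ger0_norm //; lra.
have y0' : 0 <= - y by lra.
have h1 := @sin_le_x _ _ y0'; have h2 := @sin_ge_x _ _ y0'.
rewrite sinN in h1 h2.
rewrite ger0_norm ?ltr0_norm //; last by lra.
have -> : (- y) ^+ 3 = - y ^+ 3 by rewrite exprNn /=; ring.
have : (- y) ^+ 3 = - y ^+ 3 by rewrite exprNn /=; ring.
move=> e; rewrite e in h2; lra.
Qed.

Lemma cos_bound (y : R) : 0 <= cos y - 1 + y ^+ 2 / 2 <= y ^+ 4 / 24.
Proof.
rewrite -cos_norm.
have -> : y ^+ 2 = `|y| ^+ 2 by rewrite real_normK // num_real.
have -> : y ^+ 4 = `|y| ^+ 4 by rewrite -normrX ger0_norm // exprn_even_ge0.
have h1 := @cos_ge_x _ _ (normr_ge0 y); have h2 := @cos_le_x _ _ (normr_ge0 y).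
apply/andP; split; lra.
Qed.

Lemma Zvec_le1 x (c : Idx k g) : `|Zvec R x c| <= 1.
Proof.
have hG : 2 <= (g%:R : R) by rewrite (ler_nat R 2 g).
have h0 : 0 < 1 / (g%:R : R) by rewrite divr_gt0 //; lra.
have hG0 : 0 < (g%:R : R) by lra.
have h1 : 1 / (g%:R : R) <= 1 by rewrite div1r invf_le1 //; lra.
rewrite /Zvec; case: ifP => _.
  by rewrite ger0_norm; lra.
by rewrite normrN ger0_norm; lra.
Qed.

Lemma dot_le (th : Idx k g -> R) x :
  `|dotp th (Zvec R x)| <= \sum_c `|th c|.
Proof.
rewrite /dotp; apply: (le_trans (ler_norm_sum _ _ _)); apply: ler_sum => c _.
rewrite normrM -[X in _ <= X]mulr1; apply: ler_wpM2l => //; exact: Zvec_le1.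
Qed.

Lemma sum_dot (th : Idx k g -> R) : \sum_x dotp th (Zvec R x) = 0.
Proof.
rewrite /dotp exchange_big /=; apply: big1 => c _.
by rewrite -mulr_sumr sumZ0 ?mulr0.
Qed.

Lemma sum_dot2 (th : Idx k g -> R) :
  \sum_x dotp th (Zvec R x) ^+ 2 = g%:R ^+ k * quadM th.
Proof.
rewrite /dotp /quadM.
under eq_bigr do rewrite expr2 mulr_suml; under eq_bigr do under eq_bigr do rewrite mulr_sumr.
rewrite exchange_big /= mulr_sumr; apply: eq_bigr => c _.
rewrite exchange_big /= mulr_sumr; apply: eq_bigr => c' _.
rewrite (eq_bigr (fun x => th c * th c' * (Zvec R x c * Zvec R x c'))); last first.
  by move=> x _; ring.
by rewrite -mulr_sumr sumZZ //; ring.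
Qed.

Lemma quad_ge0 (th : Idx k g -> R) : 0 <= quadM th.
Proof.
have hG : 0 < (g%:R : R) ^+ k by rewrite exprn_gt0 // ltr0n (leq_trans _ hg).
rewrite -(pmulr_rge0 _ hG) -sum_dot2; apply: sumr_ge0 => x _; exact: sqr_ge0.
Qed.

Lemma card_le (th : Idx k g -> R) (delta : R) : (forall c, `|th c| <= delta) ->
  \sum_c `|th c| <= (dimd k g)%:R * delta.
Proof.
move=> h; apply: (le_trans (ler_sum _ (fun c _ => h c))).
by rewrite sumr_const card_Idx // mulr_natl.
Qed.

Lemma inB_le (delta : R) (th : Idx k g -> R) : inB delta th -> forall c, `|th c| <= delta.
Proof.
case=> hpi [z hz] c; have [[n hn] hzd] := hz c; have := hpi c.
move=> /andP[h1 h2]; have hth : `|th c| <= pi by rewrite ler_norml h1 ltW.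
have [n0|n0] := eqVneq n 0.
  by rewrite n0 mul0r addr0 in hn; rewrite hn ltW.
have hn1 : 1 <= `|(n%:~R : R)|.
  by rewrite -intr_norm ler1z -gtz0_ge1 normr_gt0.
have hpi0 := pi_gt0 R.
have : 2 * pi <= `|th c - z c|.
  rewrite hn addrC addKr normrM (ger0_norm (_ : 0 <= 2 * pi)); last by lra.
  by rewrite -[X in X <= _]mul1r ler_wpM2r //; lra.
move=> h; apply: (le_trans _ (ltW hzd)).
have := ler_normB (th c) (z c) ; have := ler_normD (th c - z c) (z c).
rewrite subrK => _ h3.
lra.
Qed.


Lemma Re_sum (F : {ffun 'I_k -> 'Z_g} -> R[i]) : complex.Re (\sum_x F x) = \sum_x complex.Re (F x).
Proof. by apply: big_morph => [[a b] [c d]|] //=. Qed.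
Lemma Im_sum (F : {ffun 'I_k -> 'Z_g} -> R[i]) : complex.Im (\sum_x F x) = \sum_x complex.Im (F x).
Proof. by apply: big_morph => [[a b] [c d]|] //=. Qed.

Let w : R := g%:R ^- k.
Let t (th : Idx k g -> R) (x : {ffun 'I_k -> 'Z_g}) := dotp th (Zvec R x).

Lemma w_ge0 : 0 <= w.
Proof. by rewrite /w invr_ge0 exprn_ge0. Qed.

Lemma sum_w (a : R) : \sum_(x : {ffun 'I_k -> 'Z_g}) w * a = a.
Proof.
rewrite sum_const_ff // mulrA /w mulfV ?mul1r // expf_neq0 // gR_neq0 //.
Qed.

Lemma wle (f h : {ffun 'I_k -> 'Z_g} -> R) : (forall x, f x <= h x) ->
  \sum_x w * f x <= \sum_x w * h x.
Proof. by move=> H; apply: ler_sum => x _; apply: ler_wpM2l; [exact: w_ge0|]. Qed.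

Lemma ReP th : complex.Re (Phi th) = \sum_x w * cos (t th x).
Proof. rewrite /Phi Re_sum; apply: eq_bigr => x _ /=; rewrite /w /t; ring. Qed.

Lemma ImP th : complex.Im (Phi th) = \sum_x w * sin (t th x).
Proof. rewrite /Phi Im_sum; apply: eq_bigr => x _ /=; rewrite /w /t; ring. Qed.

Lemma sum_wt th : \sum_x w * t th x = 0.
Proof. by rewrite -mulr_sumr sum_dot // mulr0. Qed.

Lemma sum_wt2 th : \sum_x w * t th x ^+ 2 = quadM th.
Proof.
rewrite -mulr_sumr /t sum_dot2 // mulrA /w mulVf ?mul1r // expf_neq0 // gR_neq0 //.
Qed.

Lemma Im_bound th A : (forall x, `|t th x| <= A) -> `|complex.Im (Phi th)| <= A ^+ 3 / 6.
Proof.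
move=> hA.
have -> : complex.Im (Phi th) = \sum_x w * (sin (t th x) - t th x).
  rewrite ImP [RHS](eq_bigr (fun x => w * sin (t th x) - w * t th x)) ?sumrB ?sum_wt ?subr0 //.
  by move=> x _; rewrite mulrBr.
apply: (le_trans (ler_norm_sum _ _ _)).
rewrite -[X in _ <= X]sum_w; apply: ler_sum => x _.
rewrite normrM (ger0_norm w_ge0); apply: ler_wpM2l; first exact: w_ge0.
apply: (le_trans (sin_bound _)); apply: ler_wpM2r; first by rewrite invr_ge0.
apply: pow_le => //.
Qed.

Lemma q_le th A : (forall x, `|t th x| <= A) -> quadM th <= A ^+ 2.
Proof.
move=> hA; rewrite -sum_wt2 -[X in _ <= X]sum_w; apply: wle => x.
by rewrite -real_normK ?num_real // pow_le.
Qed.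

Lemma Re_bnd th A : (forall x, `|t th x| <= A) ->
  0 <= complex.Re (Phi th) - (1 - quadM th / 2) <= A ^+ 4 / 24.
Proof.
move=> hA.
have -> : complex.Re (Phi th) - (1 - quadM th / 2) = \sum_x w * (cos (t th x) - 1 + t th x ^+ 2 / 2).
  rewrite [RHS](eq_bigr (fun x => w * cos (t th x) - w * 1 + (w * t th x ^+ 2) / 2)); last by move=> x _; ring.
  rewrite big_split /= sumrB (sum_w 1) -mulr_suml sum_wt2 ReP; ring.
apply/andP; split.
  apply: sumr_ge0 => x _; apply: mulr_ge0; first exact: w_ge0.
  by case/andP: (cos_bound (t th x)).
rewrite -[X in _ <= X]sum_w; apply: wle => x.
case/andP: (cos_bound (t th x)) => _ h; apply: (le_trans h).
have -> : t th x ^+ 4 = `|t th x| ^+ 4 by rewrite -normrX ger0_norm // exprn_even_ge0.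
apply: ler_wpM2r; first by rewrite invr_ge0.
apply: pow_le => //.
Qed.


Lemma main_sec (delta : R) (hdelta : 0 < delta) :
  let d : R := (dimd k g)%:R in
  (exists eps : (Idx k g -> R) -> R,
     forall th : Idx k g -> R, inB delta th ->
       complex.Re (Phi th) = expR (- (1 / 2) * quadM th) * (1 + eps th) /\
       `|eps th| <= 1 / 6 * (d * delta) ^+ 4 * expR (1 / 2 * d ^+ 2 * delta ^+ 2)) /\
  (forall th : Idx k g -> R, inB delta th ->
       `|complex.Im (Phi th)| <= (d * delta) ^+ 3 / 6) /\
  (d * delta < 1 ->
     forall th : Idx k g -> R, inB delta th -> 1 / 3 < complex.Re (Phi th)).
Proof.
move=> d.
have key : forall th, inB delta th -> forall x, `|t th x| <= d * delta.
  move=> th hB x; apply: (le_trans (dot_le _ _)); exact: (@card_le th delta (@inB_le delta th hB)).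
have hD0 : 0 <= d * delta by rewrite mulr_ge0 // ltW.
split; [|split].
- exists (fun th => complex.Re (Phi th) * expR (1/2 * quadM th) - 1).
  move=> th hB; have hA := key th hB.
  set q := quadM th; set P := complex.Re (Phi th); set D := d * delta.
  set E := expR (1/2 * q); set F := expR (- (1/2) * q).
  have FE : F * E = 1 by rewrite /F /E -expRD mulNr addNr expR0.
  split.
    by rewrite addrC subrK mulrA mulrC mulrA [E * F]mulrC FE mul1r.
  have hq0 : 0 <= q := quad_ge0 th.
  have hqA : q <= D ^+ 2 := @q_le th _ hA.
  have [hr1 hr2] := andP (@Re_bnd th _ hA).
  rewrite -/q -/P -/D in hr1 hr2.
  have e1 : 1 - q / 2 <= F.
    by have := expR_ge1Dx (- (1/2) * q); rewrite /F; lra.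
  have e2 : F <= 1 - q / 2 + q ^+ 2 / 8.
    have hqh : 0 <= q / 2 by lra.
    have h := @expR_le2 _ (q / 2) hqh.
    have hF0 : 0 <= F by rewrite expR_ge0.
    have := ler_wpM2l hF0 h; rewrite mulr1 mulrA.
    have -> : expR (q / 2) = E by rewrite /E mulrC mul1r.
    rewrite FE mul1r => h2; apply: (le_trans h2).
    rewrite expr_div_n; lra.
  have hq2 : q ^+ 2 <= D ^+ 4.
    by rewrite (_ : 4 = 2 * 2)%N // exprM; apply: pow_le.
  have hPF : `|P - F| <= D ^+ 4 / 6.
    rewrite ler_norml; apply/andP; split; lra.
  have hE : E <= expR (1 / 2 * d ^+ 2 * delta ^+ 2).
    rewrite ler_expR (_ : 1 / 2 * d ^+ 2 * delta ^+ 2 = 1 / 2 * D ^+ 2); last by rewrite -mulrA -exprMn.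
    lra.
  have -> : P * E - 1 = (P - F) * E by rewrite mulrBl FE.
  rewrite normrM (ger0_norm (expR_ge0 _)).
  rewrite (_ : 1 / 6 * D ^+ 4 = D ^+ 4 / 6); last by rewrite mulrC div1r.
  by apply: ler_pM => //; exact: expR_ge0.
- move=> th hB; exact: (@Im_bound th _ (key th hB)).
- move=> hD th hB; have hA := key th hB.
  have hqA := @q_le th _ hA; have [hr1 _] := andP (@Re_bnd th _ hA).
  have : (d * delta) ^+ 2 <= d * delta.
    by rewrite expr2 ler_piMl // ltW.
  lra.
Qed.

End Main.

Theorem lemma4p5 (R : realType) (g k : nat) (hg : (2 <= g)%N) (hk : (2 <= k)%N)
  (delta : R) (hdelta : 0 < delta) :
  let d : R := (dimd k g)%:R in
  (exists eps : (Idx k g -> R) -> R,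
     forall th : Idx k g -> R, inB delta th ->
       complex.Re (Phi th) = expR (- (1 / 2) * quadM th) * (1 + eps th) /\
       `|eps th| <= 1 / 6 * (d * delta) ^+ 4 * expR (1 / 2 * d ^+ 2 * delta ^+ 2)) /\
  (forall th : Idx k g -> R, inB delta th ->
       `|complex.Im (Phi th)| <= (d * delta) ^+ 3 / 6) /\
  (d * delta < 1 ->
     forall th : Idx k g -> R, inB delta th -> 1 / 3 < complex.Re (Phi th)).
Proof. exact: main_sec. Qed.
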